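(* Let $s\geq 3$, let $p,q$ be coprime integers with $q>0$, and let $k\in G_{K_s}(p,q)$ satisfy $M=k^q$, $L=k^{-p}$. Suppose $G_{K_s}(p,q)$ acts (on the right) on $\mathbb{R}$ by orientation-preserving homeomorphisms. If $xk>x$ for every $x\in\mathbb{R}$, then $xl>x$ for every $x\in\mathbb{R}$.
   Context: Let $R=c\,l\,c\,l^{-1}c^{-1}l^{-s}c^{-1}l^{-1}c\,l\,c\,l^{s-1}$, $M=c$ and $L=c^{-(2s-2)}\,l\,c\,l^{s}\,c\,l^{s}\,c\,l\,c^{-(2s+9)}$, and $G_{K_s}(p,q)=\langle c,l\mid R,\ M^pL^q\rangle$. For an action we write $xg$ for the image of $x$ under $g$, and $xg_1g_2=(xg_1)g_2$. *)

(* Defs.v *)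
(* the group G_{K_s}(p,q) is given by its presentation
   (words in c, l modulo the congruence generated by free reduction and the
   two relators), and an action on R is given by the images of the
   generators (orientation-preserving homeomorphisms) killing the relators. *)
From Stdlib Require Import Reals ZArith List.
Import ListNotations.
Open Scope R_scope.

Inductive gen : Type := gc | gl.

(* a letter: (generator, is_inverse) *)
Definition letter : Type := (gen * bool)%type.
Definition word : Type := list letter.

Definition flip (a : letter) : letter := (fst a, negb (snd a)).
Definition winv (w : word) : word := rev (map flip w).

Fixpoint wrep (n : nat) (w : word) : word :=
  match n with O => [] | S n' => w ++ wrep n' w end.

Definition wpow (w : word) (n : Z) : word :=
  if (0 <=? n)%Z then wrep (Z.abs_nat n) w else wrep (Z.abs_nat n) (winv w).

Definition c1 : word := [(gc, false)].
Definition l1 : word := [(gl, false)].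

Definition relR (s : nat) : word :=
  c1 ++ l1 ++ c1 ++ wpow l1 (-1) ++ wpow c1 (-1) ++ wpow l1 (- Z.of_nat s)
  ++ wpow c1 (-1) ++ wpow l1 (-1) ++ c1 ++ l1 ++ c1 ++ wpow l1 (Z.of_nat s - 1).

Definition wordM : word := c1.

Definition wordL (s : nat) : word :=
  wpow c1 (- (2 * Z.of_nat s - 2)) ++ l1 ++ c1 ++ wpow l1 (Z.of_nat s) ++ c1
  ++ wpow l1 (Z.of_nat s) ++ c1 ++ l1 ++ wpow c1 (- (2 * Z.of_nat s + 9)).

Definition relators (s : nat) (p q : Z) : list word :=
  [relR s; wpow wordM p ++ wpow (wordL s) q].

Inductive eqG (s : nat) (p q : Z) : word -> word -> Prop :=
| eqG_refl w : eqG s p q w w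
| eqG_sym u v : eqG s p q u v -> eqG s p q v u
| eqG_trans u v w : eqG s p q u v -> eqG s p q v w -> eqG s p q u w
| eqG_free u v a : eqG s p q (u ++ a :: flip a :: v) (u ++ v)
| eqG_rel u v r : In r (relators s p q) -> eqG s p q (u ++ r ++ v) (u ++ v).

(* right action: x (w1 w2) = (x w1) w2 *)
Definition act (f finv : gen -> R -> R) (w : word) (x : R) : R :=
  fold_left (fun (y : R) (a : letter) => if snd a then finv (fst a) y else f (fst a) y) w x.

Definition or_pres_homeo (h hinv : R -> R) : Prop :=
  continuity h /\ (forall x y, x < y -> h x < h y) /\
  (forall x, hinv (h x) = x) /\ (forall x, h (hinv x) = x).

Definition is_action (s : nat) (p q : Z) (f finv : gen -> R -> R) : Prop :=
  (forall g, or_pres_homeo (f g) (finv g)) /\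
  (forall r, In r (relators s p q) -> forall x, act f finv r x = x).

(* Main.v *)
Require Import Defs.
From Stdlib Require Import Reals ZArith List Lra Lia.
Import ListNotations.
Open Scope R_scope.

Fixpoint itr (n : nat) (g : R -> R) (x : R) : R :=
  match n with O => x | S n' => itr n' g (g x) end.

Lemma itr_S' n g x : itr (S n) g x = g (itr n g x).
Proof. revert x; induction n; intros x; simpl; auto. rewrite <- IHn. reflexivity. Qed.

Lemma itr_inv n g h : (forall x, g (h x) = x) -> forall x, itr n g (itr n h x) = x.
Proof.
  intros H; induction n; intros x; [reflexivity|].
  rewrite (itr_S' n h). change (itr n g (g (h (itr n h x))) = x). rewrite H. apply IHn.
Qed.

Lemma itr_mono n g : (forall x y, x < y -> g x < g y) -> forall x y, x < y -> itr n g x < itr n g y.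
Proof. intros H; induction n; intros x y Hxy; simpl; auto. Qed.

Lemma itr_pos n g : (forall x, g x > x) -> forall x, itr (S n) g x > x.
Proof.
  intros H; induction n; intros x. simpl. apply H.
  rewrite itr_S'. specialize (IHn x). specialize (H (itr (S n) g x)). lra.
Qed.

Lemma act_app f finv u v x : act f finv (u ++ v) x = act f finv v (act f finv u x).
Proof. unfold act. apply fold_left_app. Qed.

Lemma act_wrep f finv n w x : act f finv (wrep n w) x = itr n (act f finv w) x.
Proof. revert x; induction n; intros x; simpl; auto. rewrite act_app. apply IHn. Qed.

Lemma act_eqG s p q f finv u v : is_action s p q f finv -> eqG s p q u v ->
  forall x, act f finv u x = act f finv v x.
Proof.
  intros [Hh Hr] H; induction H as [w|u v H IH|u v w H1 IH1 H2 IH2|u v a|u v r Hin]; intros x.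
  - reflexivity.
  - rewrite IH; auto.
  - rewrite IH1; auto.
  - rewrite !act_app. destruct a as [g b]; destruct (Hh g) as (_&_&Ha&Hb);
    destruct b; simpl; [rewrite Hb|rewrite Ha]; reflexivity.
  - rewrite !act_app. f_equal. apply Hr; auto.
Qed.

Lemma wpow_neg_nat w n : (0 < n)%nat -> wpow w (- Z.of_nat n) = wrep n (winv w).
Proof.
  intros H. unfold wpow.
  replace (0 <=? - Z.of_nat n)%Z with false by (symmetry; apply Z.leb_gt; lia).
  f_equal. rewrite Zabs2Nat.abs_nat_spec, Z.abs_opp, Z.abs_eq by lia. apply Nat2Z.id.
Qed.

Lemma wpow_pos_nat w n : wpow w (Z.of_nat n) = wrep n w.
Proof.
  unfold wpow. replace (0 <=? Z.of_nat n)%Z with true by (symmetry; apply Z.leb_le; lia).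
  f_equal. apply Zabs2Nat.id.
Qed.

Theorem lemma3p4 (s : nat) (p q : Z) (f finv : gen -> R -> R) (k : word) :
  (3 <= s)%nat -> Z.gcd p q = 1%Z -> (0 < q)%Z ->
  eqG s p q wordM (wpow k q) -> eqG s p q (wordL s) (wpow k (- p)) ->
  is_action s p q f finv ->
  (forall x : R, act f finv k x > x) ->
  forall x : R, act f finv l1 x > x.
Proof.
  intros Hs _ Hq HM _ Hact Hk.
  assert (Hc : forall x, f gc x > x).
  { intros x. change (f gc x) with (act f finv wordM x).
    rewrite (act_eqG _ _ _ _ _ _ _ Hact HM).
    unfold wpow. replace (0 <=? q)%Z with true by (symmetry; apply Z.leb_le; lia).
    rewrite act_wrep. destruct (Z.abs_nat q) eqn:E. lia. apply itr_pos. auto. }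
  destruct Hact as [Hh Hr].
  destruct (Hh gc) as (_ & Cm & Ci1 & Ci2).
  destruct (Hh gl) as (_ & Lm & Li1 & Li2).
  set (C := f gc) in *. set (Ci := finv gc) in *.
  set (Lf := f gl) in *. set (Li := finv gl) in *.
  destruct s as [|n]; [lia|].
  assert (HR : forall x, itr n Lf (C (Lf (C (Li (Ci (itr (S n) Li (Ci (Li (C (Lf (C x))))))))))) = x).
  { intros x. transitivity (act f finv (relR (S n)) x);
      [|apply Hr; left; reflexivity].
    unfold relR.
    rewrite (wpow_neg_nat l1 (S n)) by lia.
    replace (Z.of_nat (S n) - 1)%Z with (Z.of_nat n) by lia.
    rewrite wpow_pos_nat.
    rewrite !act_app, !act_wrep. reflexivity. }
  intros y. change (act f finv l1 y) with (Lf y).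
  destruct (Rlt_or_le y (Lf y)) as [H|H]; [lra|exfalso].
  set (x := Li (Ci (itr n Li y))).
  assert (HZ : itr n Lf (C (Lf x)) = y).
  { unfold x. rewrite Li2, Ci2. apply itr_inv. auto. }
  assert (HD : forall u v, itr n Lf (C (Lf (C u))) = itr n Lf (C (Lf (C v))) -> u = v).
  { intros u v E. destruct (Rtotal_order u v) as [h|[h|h]]; auto; exfalso.
    - assert (itr n Lf (C (Lf (C u))) < itr n Lf (C (Lf (C v)))) by
        (apply itr_mono; auto). lra.
    - assert (itr n Lf (C (Lf (C v))) < itr n Lf (C (Lf (C u)))) by
        (apply itr_mono; auto). lra. }
  assert (HP : forall w, Lf (C (itr (S n) Lf (C (Lf w)))) =
                         C (Lf (C (itr n Lf (C (Lf (C w))))))).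
  { intros w. set (z := C (Lf (C (itr n Lf (C (Lf (C w))))))).
    assert (E : Li (Ci (itr (S n) Li (Ci (Li z)))) = w).
    { apply HD. apply HR. }
    rewrite <- E at 1. rewrite Li2, Ci2, itr_inv by auto. rewrite Ci2, Li2. reflexivity. }
  specialize (HP x).
  rewrite itr_S' in HP. rewrite HZ in HP.
  assert (h1 : Lf (C (Lf y)) <= Lf (C y)).
  { destruct (Req_dec (Lf y) y) as [e|e]. rewrite e; lra.
    left. apply Lm, Cm. lra. }
  assert (h2 : itr n Lf (C (Lf (C x))) > y).
  { rewrite <- HZ. apply itr_mono; auto. apply Cm, Lm, Hc. }
  assert (h3 : Lf (C (itr n Lf (C (Lf (C x))))) > Lf (C y)) by (apply Lm, Cm; lra).
  specialize (Hc (Lf (C (itr n Lf (C (Lf (C x))))))).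
  lra.
Qed.
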